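(* Suppose that $1/n\ll \eta\ll \zeta,1/r,1/k$. Suppose $F$ is an allocation such that for every $j\in[r]$ there exists $f\in F$ with $f^{-1}(j)\neq\emptyset$. Let $\mathcal{P}$ be a partition of a set $V$ into parts $V_1,\dots,V_r$, each of size $n$, and let $J$ be a $\mathcal{P}F$-partite $k$-complex on $V$ satisfying $\delta^F(J)\ge (n,\zeta n,\dots,\zeta n)$. Then for every $j\in[r]$ and every $v\in V_j$, $$|\tilde N_{\eta,1}(v,J_k)\cap V_j|\ge \delta^F_{k-1}(J)-\sqrt{\eta}\,n.$$
   Context: Hierarchy convention: ''$a\ll b$'' means that for every $b>0$ there is $a_0>0$ such that the statement holds for all $0<a\le a_0$; longer hierarchies are read analogously. A $k$-complex is a hypergraph $J$ in which every edge has at most $k$ vertices and every subset of an edge is an edge; $J_i$ is the set of edges of size exactly $i$. Allocations: an allocation function is a map $f:[k]\to[r]$, with index vector $\mathbf{i}(f)=(|f^{-1}(1)|,\dots,|f^{-1}(r)|)$. Given a multiset $I$ of $k$-vectors in $\mathbb{Z}^r$ (nonnegative integer vectors with coordinate sum $k$), an allocation $F$ is the multiset obtained by choosing, for each $\mathbf{i}\in I$ (with repetition), some $f$ with $\mathbf{i}(f)=\mathbf{i}$ and including all $k!$ functions $f\circ\sigma$, $\sigma\in\mathrm{Sym}_k$ (with repetition). $J$ on $V=V_1\cup\dots\cup V_r$ is $\mathcal{P}F$-partite if for every $j\in[k]$ and $e\in J_j$ there is $f\in F$ with $e=\{v_1,\dots,v_j\}$ and $v_i\in V_{f(i)}$ for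 all $i\in[j]$. For $f\in F$ and $0\le j\le k-1$, $\delta^f_j(J)$ is the largest $m$ such that for every edge $\{v_1,\dots,v_j\}\in J$ with $v_i\in V_{f(i)}$ there are at least $m$ vertices $v_{j+1}\in V_{f(j+1)}$ with $\{v_1,\dots,v_{j+1}\}\in J$; $\delta^F_j(J)=\min_{f\in F}\delta^f_j(J)$, $\delta^F(J)=(\delta^F_0(J),\dots,\delta^F_{k-1}(J))$, compared coordinatewise. Reachability: for a $k$-graph $H$ on $N$ vertices, two vertices $u,w$ are $(\beta,i)$-reachable in $H$ if there are at least $\beta N^{ik-1}$ sets $S$ of size $ik-1$ such that both $H[S\cup\{u\}]$ and $H[S\cup\{w\}]$ have perfect matchings. With respect to the partition $\mathcal{P}$, $\tilde N_{\beta,i}(v,H)$ denotes the set of vertices in the same part of $\mathcal{P}$ as $v$ that are $(\beta,i)$-reachable to $v$ in $H$. Here $H=J_k$ and $N=rn$. *)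

(* Defs.v *)
From Stdlib Require Import Reals.
From mathcomp Require Import all_boot all_order all_fingroup.
Unset Printing Implicit Defensive.

Section Defs.
Variables (r n k : nat).

(* Vertex set V = V_1 u ... u V_r, each part of size n: vertex (j, x) lies in
   part V_j. *)
Definition vtx := ('I_r * 'I_n)%type.
Definition part (v : vtx) : 'I_r := v.1.

(* allocation functions [k] -> [r] (0-indexed) *)
Definition allocfun := {ffun 'I_k -> 'I_r}.

(* F (as a set; multiplicities are irrelevant for all notions used) is an
   allocation: the union, over a family of chosen functions g, of all
   g \o sigma, sigma in Sym_k. *)
Definition is_allocation (F : {set allocfun}) : Prop :=
  exists gs : seq allocfun,
    F = \bigcup_(g <- gs) [set [ffun x => g (s x)] | s : 'S_k].

Definition is_kcomplex (J : {set {set vtx}}) : Prop :=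
  (forall e, e \in J -> #|e| <= k) /\
  (forall e e' : {set vtx}, e \in J -> e' \subset e -> e' \in J).

Definition is_PF_partite (F : {set allocfun}) (J : {set {set vtx}}) : Prop :=
  forall e, e \in J -> 1 <= #|e| <= k ->
    exists2 f, f \in F &
      exists v : {ffun 'I_k -> vtx},
        e = [set v i | i : 'I_k & i < #|e|] /\
        (forall i : 'I_k, i < #|e| -> part (v i) = f i).

Definition tset (j : nat) (v : {ffun 'I_j -> vtx}) : {set vtx} :=
  [set v i | i : 'I_j].

Definition f_tuple (J : {set {set vtx}}) (f : allocfun) (j : 'I_k)
    (v : {ffun 'I_j -> vtx}) : bool :=
  injectiveb v && (tset j v \in J) &&
  [forall i : 'I_j, part (v i) == f (widen_ord (ltnW (ltn_ord j)) i)].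

Definition ext_deg (J : {set {set vtx}}) (f : allocfun) (j : 'I_k)
    (v : {ffun 'I_j -> vtx}) : nat :=
  #|[set w : vtx | (part w == f j) && (w \notin tset j v) && (w |: tset j v \in J)]|.

(* delta^f_j(J): minimum of ext_deg over all such ordered edges (each value is
   at most #|V|, so the neutral element #|V| is harmless); convention 0 if
   there is no such edge. *)
Definition delta_f (J : {set {set vtx}}) (f : allocfun) (j : 'I_k) : nat :=
  if [exists v, f_tuple J f j v]
  then \big[minn/#|[set: vtx]|]_(v | f_tuple J f j v) ext_deg J f j v
  else 0.

Definition delta_F (F : {set allocfun}) (J : {set {set vtx}}) (j : 'I_k) : nat :=
  \big[minn/#|[set: vtx]|]_(f in F) delta_f J f j.

Definition top_edges (J : {set {set vtx}}) : {set {set vtx}} :=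
  [set e in J | #|e| == k].

Definition has_pm (H : {set {set vtx}}) (X : {set vtx}) : bool :=
  [exists M : {set {set vtx}}, (M \subset H) && trivIset M && (cover M == X)].

Definition reach_count (H : {set {set vtx}}) (i : nat) (u w : vtx) : nat :=
  #|[set S : {set vtx} | (#|S| == i * k - 1) && has_pm H (u |: S)
                                               && has_pm H (w |: S)]|.

Definition reachable (H : {set {set vtx}}) (beta : R) (i : nat) (u w : vtx) : bool :=
  if Rle_dec (Rmult beta (pow (INR #|[set: vtx]|) (i * k - 1)))
             (INR (reach_count H i u w)) then true else false.

Definition tildeN (H : {set {set vtx}}) (beta : R) (i : nat) (v : vtx) : {set vtx} :=
  [set w : vtx | (part w == part v) &&
                 reachable H beta i v w ].
End Defs.

(* Main.v *)
Require Import Defs.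
From Stdlib Require Import Reals Lra Psatz.
From mathcomp Require Import all_boot all_order all_fingroup.

Section RealPart.
Local Open Scope R_scope.
Lemma final_real (zeta eta c T d A Mx n r kk KK : R) (K : nat) :
  0 < zeta -> 0 < eta -> 0 < n -> 0 <= c -> sqrt eta <= c ->
  c * (r*kk)^K = zeta^K -> 0 <= r -> 0 <= kk -> 0 <= KK -> KK <= kk^K ->
  (zeta*n)^K <= T -> T*d <= A*T + n*(KK*Mx) -> 0 <= Mx -> Mx <= eta*(r*n)^K ->
  d - sqrt eta * n <= A.
Proof.
intros hz he hn hc hs hc2 hr hkk hKK hKK2 hT hmain hM0 hM.
rewrite !Rpow_mult_distr in hc2 hT hM.
set (s := sqrt eta) in *.
assert (hs0 : 0 < s) by (apply sqrt_lt_R0; lra).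
assert (hss : s * s = eta) by (apply sqrt_sqrt; lra).
set (a := zeta ^ K) in *. set (b := n ^ K) in *. set (g := r ^ K) in *. set (h := kk ^ K) in *.
assert (ha : 0 < a) by (apply pow_lt; lra).
assert (hb : 0 < b) by (apply pow_lt; lra).
assert (hg : 0 <= g) by (apply pow_le; lra).
assert (hh : 0 <= h) by (apply pow_le; lra).
destruct (Rle_or_lt (d - s * n) A) as [H|H]; [exact H|exfalso].
assert (h1 : T * (d - A) > T * (s * n)) by (apply Rmult_lt_compat_l; nra).
assert (h2 : T * (s * n) >= a * b * (s * n)) by (apply Rle_ge, Rmult_le_compat_r; nra).
assert (h3 : T * (d - A) <= n * (KK * Mx)) by nra.
assert (h4 : KK * Mx <= h * (eta * (g * b))).
  { apply Rmult_le_compat; nra. }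
assert (h5 : eta <= s * c) by nra.
assert (h6 : h * (eta * (g * b)) <= h * (s * c * (g * b))).
  { apply Rmult_le_compat_l; [lra|]. apply Rmult_le_compat_r; nra. }
assert (h7 : h * (s * c * (g * b)) = s * b * (c * (g * h))) by ring.
rewrite hc2 in h7.
nra.
Qed.
End RealPart.

Lemma bigminn_le (I:finType) (P:pred I) (F : I -> nat) x j :
  P j -> \big[minn/x]_(i | P i) F i <= F j.
Proof. move=> Pj; rewrite -minEnat; exact: (Order.TotalTheory.bigmin_le_cond x F Pj). Qed.

Section S.
Variables (r n K : nat).
Local Notation k := K.+1.
Local Notation V := (vtx r n).
Variables (F : {set allocfun r k}) (J : {set {set V}}).
Hypothesis Halloc : is_allocation r k F.
Hypothesis Hcx : is_kcomplex r n k J.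
Hypothesis Hpart : is_PF_partite r n k F J.

Lemma F_perm (f : allocfun r k) (s : 'S_k) : f \in F -> [ffun x => f (s x)] \in F.
Proof.
case: Halloc => gs ->; rewrite bigcup_seq => /bigcupP [g gin /imsetP [s0 _ ->]].
apply/bigcupP; exists g => //; apply/imsetP; exists (s * s0)%g => //.
by apply/ffunP => x; rewrite !ffunE permM.
Qed.

Lemma tset_card j (t : {ffun 'I_j -> V}) : injective t -> #|tset r n j t| = j.
Proof. by move=> inj; rewrite /tset card_imset // card_ord. Qed.

Definition Tv v := [set t : {ffun 'I_K -> V} | injectiveb t && (v \notin tset r n K t) && (v |: tset r n K t \in J)].
Definition Cw v w := [set t in Tv v | (w \notin tset r n K t) && (w |: tset r n K t \in J)].

Lemma pm_one (X : {set V}) : X \in J -> #|X| = k -> has_pm r n (top_edges r n k J) X.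
Proof.
move=> XJ cX; apply/existsP; exists [set X].
by rewrite trivIset1 cover1 eqxx andbT sub1set inE XJ cX eqxx.
Qed.

Lemma Cw_le v w : #|Cw v w| <= K ^ K * reach_count r n k (top_edges r n k J) 1 v w.
Proof.
rewrite /reach_count; set R := [set S : {set V} | _].
have mapR : forall t, t \in Cw v w -> tset r n K t \in R.
  move=> t; rewrite !inE => /andP [/andP [/andP [/injectiveP inj vn] vJ] /andP [wn wJ]].
  rewrite mul1n subn1 /= tset_card // eqxx /=.
  by rewrite !pm_one // cardsU1 ?vn ?wn tset_card.
rewrite -sum1_card (partition_big (tset r n K) (mem R)) //=.
rewrite mulnC -sum_nat_const; apply: leq_sum => S SR.
rewrite sum1dep_card.
have cS : #|S| = K by move: SR; rewrite inE mul1n subn1 => /andP [/andP [/eqP -> _] _].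
have cF : #|[pred t : {ffun 'I_K -> V} | t \in ffun_on (mem S)]| = K ^ K by rewrite card_ffun_on cS card_ord.
rewrite -cF; apply: subset_leq_card.
apply/subsetP => t; rewrite inE => /andP [_ /eqP <-]; apply/ffun_onP => x.
by apply/imsetP; exists x.
Qed.
Lemma ext_ge v t : t \in Tv v ->
  delta_F r n k F J ord_max <=
  #|[set w : V | (part r n w == part r n v) && (w \notin tset r n K t) && (w |: tset r n K t \in J)]|.
Proof.
rewrite inE => /andP [/andP [/injectiveP tinj vn] eJ].
set e := v |: tset r n K t in eJ *.
have ce : #|e| = k by rewrite cardsU1 vn tset_card.
have ce1 : 1 <= #|e| <= k by rewrite ce leqnn.
have [f fF [u [eu pu]]] := Hpart _ eJ ce1.
have eu' : e = [set u i | i : 'I_k].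
  rewrite eu; apply/setP => x; apply/imsetP/imsetP => [[i _ ->]|[i _ ->]]; exists i => //.
  by rewrite inE ce ltn_ord.
have pu' : forall i, part r n (u i) = f i by move=> i; apply: pu; rewrite ce ltn_ord.
have uinj : injective u.
  have : #|[set u i | i : 'I_k]| == #|'I_k| by rewrite -eu' ce card_ord.
  by move/imset_injP => H i j; apply: H.
have : v \in [set u i | i : 'I_k] by rewrite -eu' setU11.
move=> /imsetP [p _ vp].
set s := tperm p (@ord_max K).
set f' := [ffun x => f (s x)].
have f'F : f' \in F by apply: F_perm.
set y : {ffun 'I_K -> V} := [ffun i => u (s (widen_ord (ltnW (ltn_ord (@ord_max K))) i))].
have yinj : injective y.
  move=> i j; rewrite !ffunE => /uinj /perm_inj /(congr1 val) /= ij; exact: val_inj.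
have ce' : #|e :\ v| = K.
  by move: ce; rewrite (cardsD1 v) setU11 add1n => -[].
have te : tset r n K t = e :\ v by rewrite setU1K.
have ye : tset r n K y = e :\ v.
  apply/eqP; rewrite eqEcard ce' tset_card // leqnn andbT.
  apply/subsetP => x /imsetP [i _ ->]; rewrite in_setD1 eu'; apply/andP; split.
    apply/eqP; rewrite ffunE vp => /uinj H.
    have : s (s (widen_ord (ltnW (ltn_ord (@ord_max K))) i)) = s p by rewrite H.
    rewrite tpermK tpermL => /(congr1 val) /= iK.
    by move: (ltn_ord i); rewrite iK ltnn.
  by rewrite ffunE; apply/imsetP; eexists.
have tJ : tset r n K t \in J.
  by case: Hcx => _ H; apply: H eJ _; apply: subsetUr.
have fy : f_tuple r n k J f' ord_max y.
  rewrite /f_tuple ye -te tJ andbT; apply/andP; split.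
    by apply/injectiveP.
  by apply/forallP => i; rewrite !ffunE pu'.
have H1 : delta_F r n k F J ord_max <= delta_f r n k J f' ord_max.
  by apply: bigminn_le.
apply: (leq_trans H1).
have H2 : delta_f r n k J f' ord_max <= ext_deg r n k J f' ord_max y.
  rewrite /delta_f.
  have -> : [exists v, f_tuple r n k J f' ord_max v] by apply/existsP; exists y.
  by apply: bigminn_le.
apply: (leq_trans H2).
rewrite /ext_deg ye -te.
have -> : f' ord_max = part r n v by rewrite ffunE tpermR vp pu'.
by [].
Qed.
Definition Pset (f0 : allocfun r k) (v : V) (i : nat) : {set {ffun 'I_i -> V}} :=
  [set u : {ffun 'I_i -> V} | injectiveb u && (tset r n i u \in J) &&
           [forall x : 'I_i, part r n (u x) == f0 (inord x)] &&
           [forall x : 'I_i, (val x == 0) ==> (u x == v)]].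

Definition extf (m : nat) (u : {ffun 'I_m -> V}) (w : V) : {ffun 'I_m.+1 -> V} :=
  [ffun x : 'I_m.+1 => if unlift ord_max x is Some y then u y else w].
Definition restr (m : nat) (x : {ffun 'I_m.+1 -> V}) : {ffun 'I_m -> V} :=
  [ffun y => x (lift ord_max y)].

Arguments extf {m}. Arguments restr {m}.

Lemma val_liftmax m (y : 'I_m) : val (lift ord_max y) = val y.
Proof. by rewrite /= /bump leqNgt ltn_ord. Qed.

Lemma extf_max m (u : {ffun 'I_m -> V}) (w : V) : @extf m u w ord_max = w.
Proof. by rewrite ffunE unlift_none. Qed.
Lemma extf_lift m (u : {ffun 'I_m -> V}) (w : V) y : @extf m u w (lift ord_max y) = u y.
Proof. by rewrite ffunE liftK. Qed.
Lemma restr_extf m (u : {ffun 'I_m -> V}) (w : V) : restr (@extf m u w) = u.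
Proof. by apply/ffunP => y; rewrite ffunE extf_lift. Qed.

Lemma tset_extf m (u : {ffun 'I_m -> V}) (w : V) : tset r n m.+1 (extf u w) = w |: tset r n m u.
Proof.
apply/setP => z; apply/imsetP/setU1P => [[x _ ->]|[->| /imsetP [y _ ->]]].
- by case: (unliftP ord_max x) => [y ->|->]; [rewrite extf_lift; right; apply/imsetP; exists y | rewrite extf_max; left].
- by exists ord_max => //; rewrite extf_max.
- by exists (lift ord_max y) => //; rewrite extf_lift.
Qed.

Lemma extf_inj m (u : {ffun 'I_m -> V}) (w : V) : injective u -> w \notin tset r n m u -> injective (extf u w).
Proof.
move=> ui wn x1 x2.
case: (unliftP ord_max x1) => [y1 ->|->]; case: (unliftP ord_max x2) => [y2 ->|->];
  rewrite ?extf_lift ?extf_max //.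
- by move/ui => ->.
- by move=> e; case/negP: wn; rewrite -e; apply/imsetP; exists y1.
- by move=> e; case/negP: wn; rewrite e; apply/imsetP; exists y2.
Qed.

Lemma P_step f0 v (j : 'I_k) : 0 < j ->
  #|Pset f0 v j| * delta_f r n k J f0 j <= #|Pset f0 v j.+1|.
Proof.
move=> j0.
rewrite -[#|Pset f0 v j.+1|]sum1_card (partition_big (@restr j) predT) //=.
rewrite (bigID (mem (Pset f0 v j))) /=.
apply: leq_trans (leq_addr _ _).
rewrite -sum_nat_const; apply: leq_sum => u uP.
have uP' := uP; rewrite inE in uP'.
move: uP' => /andP [/andP [/andP [/injectiveP ui uJ] /forallP up] /forallP uv].
have ft : f_tuple r n k J f0 j u.
  rewrite /f_tuple uJ andbT; apply/andP; split; first by apply/injectiveP.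
  apply/forallP => x; rewrite (eqP (up x)); apply/eqP; congr (f0 _); apply: val_inj.
  by rewrite /= inordK // ltnS (leq_trans (ltnW (ltn_ord x))) // -ltnS.
have H1 : delta_f r n k J f0 j <= ext_deg r n k J f0 j u.
  rewrite /delta_f.
  have -> : [exists v, f_tuple r n k J f0 j v] by apply/existsP; exists u.
  by apply: bigminn_le.
apply: (leq_trans H1).
rewrite /ext_deg.
set E := [set w | _].
rewrite sum1dep_card.
rewrite -(@card_imset _ _ (extf u) E); last first.
  move=> w1 w2 H; have := congr1 (fun x : {ffun 'I_j.+1 -> V} => x ord_max) H.
  by rewrite /= !extf_max.
apply: subset_leq_card; apply/subsetP => z /imsetP [w wE ->].
move: wE; rewrite /E inE => /andP [/andP [pw wn] wJ].
rewrite inE restr_extf eqxx andbT inE tset_extf wJ andbT.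
apply/andP; split; first (apply/andP; split).
- by apply/injectiveP; apply: extf_inj.
- apply/forallP => x; case: (unliftP ord_max x) => [y ->|->].
    rewrite extf_lift (eqP (up y)); apply/eqP; congr (f0 _); apply: val_inj.
    by rewrite val_liftmax.
  by rewrite extf_max (eqP pw) /= inord_val.
- apply/forallP => x; case: (unliftP ord_max x) => [y ->|->].
    by rewrite extf_lift val_liftmax; apply: uv.
  by rewrite /= eqn0Ngt j0.
Qed.
Lemma P1 (f0 : allocfun r k) v : part r n v = f0 ord0 -> [set v] \in J -> 0 < #|Pset f0 v 1|.
Proof.
move=> pv vJ; apply/card_gt0P; exists [ffun _ : 'I_1 => v].
have tv : tset r n 1 [ffun _ : 'I_1 => v] = [set v].
  apply/setP => z; rewrite inE; apply/imsetP/eqP => [[x _ ->]|->]; first by rewrite ffunE.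
  by exists ord0 => //; rewrite ffunE.
rewrite inE tv vJ andbT; apply/andP; split; first (apply/andP; split).
- by apply/injectiveP => x y _; rewrite (ord1 x) (ord1 y).
- apply/forallP => x; rewrite ffunE pv (ord1 x); apply/eqP; congr (f0 _); apply: val_inj.
  by rewrite /= inordK.
- by apply/forallP => x; rewrite ffunE eqxx implybT.
Qed.

Definition tailf (x : {ffun 'I_k -> V}) : {ffun 'I_K -> V} := [ffun i => x (lift ord0 i)].

Lemma P_tail (f0 : allocfun r k) v : #|Pset f0 v k| <= #|Tv v|.
Proof.
have x0 : forall x, x \in Pset f0 v k -> x ord0 = v.
  move=> x; rewrite inE => /andP [_ /forallP H]; exact: (eqP (implyP (H ord0) (eqxx _))).
rewrite -(@card_in_imset _ _ tailf); last first.
  move=> x1 x2 P1 P2 e; apply/ffunP => i.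
  case: (unliftP ord0 i) => [y ->|->]; last by rewrite !x0.
  by have := congr1 (fun x : {ffun 'I_K -> V} => x y) e; rewrite /= !ffunE.
apply: subset_leq_card; apply/subsetP => z0 /imsetP [x xP ->].
have xv := x0 x xP.
move: xP; rewrite inE => /andP [/andP [/andP [/injectiveP xi xJ] _] _].
have tx : tset r n k x = v |: tset r n K (tailf x).
  apply/setP => z; apply/imsetP/setU1P => [[i _ ->]|[->| /imsetP [y _ ->]]].
  - case: (unliftP ord0 i) => [y ->|->]; last by left.
    by right; apply/imsetP; exists y => //; rewrite ffunE.
  - by exists ord0.
  - by exists (lift ord0 y) => //; rewrite ffunE.
rewrite inE -tx xJ andbT; apply/andP; split.
  by apply/injectiveP => i j; rewrite !ffunE => /xi /lift_inj.
apply/imsetP => -[i _]; rewrite ffunE -xv => /xi /eqP; by rewrite (negbTE (neq_lift _ _)).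
Qed.
Lemma card_sum_bool (T : finType) (A : pred T) (c : T -> bool) :
  #|[set x | A x && c x]| = \sum_(x | A x) (c x : nat).
Proof. by rewrite -sum1dep_card big_mkcondr /=; apply: eq_bigr => x _; case: (c x). Qed.

Lemma sum_Cw v : #|Tv v| * delta_F r n k F J ord_max <=
  \sum_(w | part r n w == part r n v) #|Cw v w|.
Proof.
have -> : \sum_(w | part r n w == part r n v) #|Cw v w| =
  \sum_(w | part r n w == part r n v) \sum_(t | t \in Tv v)
     (((w \notin tset r n K t) && (w |: tset r n K t \in J)) : nat).
  apply: eq_bigr => w _; rewrite -card_sum_bool; apply: eq_card => t.
  by rewrite !inE.
rewrite exchange_big /= -sum_nat_const; apply: leq_sum => t tT.
apply: (leq_trans (ext_ge _ _ tT)); apply: eq_leq.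
rewrite -card_sum_bool; apply: eq_card => w; by rewrite !inE andbA.
Qed.
Lemma sum_constP (T : finType) (Q : pred T) c : \sum_(x | Q x) c = #|[set x | Q x]| * c.
Proof. by rewrite -sum1dep_card big_distrl /=; apply: eq_bigr => x _; rewrite mul1n. Qed.

Lemma card_part c : #|[set w : V | part r n w == c]| = n.
Proof.
have -> : [set w : V | part r n w == c] = [set (c, x) | x : 'I_n].
  apply/setP => -[a b]; rewrite inE /part /=; apply/eqP/imsetP => [->|[x _ [-> _]]] //.
  by exists b.
by rewrite card_imset ?card_ord // => x y [].
Qed.

Lemma main_nat v (A : {set V}) :
  #|Tv v| * delta_F r n k F J ord_max <=
  #|A| * #|Tv v| +
  n * (K ^ K * \max_(w in [set w | part r n w == part r n v] :\: A)
                 reach_count r n k (top_edges r n k J) 1 v w).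
Proof.
set Mx := \max_(w in _) _.
apply: (leq_trans (sum_Cw v)).
rewrite (bigID (mem A)) /=; apply: leq_add.
  apply: (@leq_trans (\sum_(w | (part r n w == part r n v) && (w \in A)) #|Tv v|)).
    apply: leq_sum => w _; apply: subset_leq_card; apply/subsetP => t; rewrite inE.
    by case/andP.
  rewrite sum_constP leq_mul2r; apply/orP; right; apply: subset_leq_card.
  by apply/subsetP => w; rewrite inE => /andP [].
apply: (@leq_trans (\sum_(w | (part r n w == part r n v) && (w \notin A)) (K ^ K * Mx))).
  apply: leq_sum => w /andP [pw wA]; apply: (leq_trans (Cw_le v w)).
  rewrite leq_mul2l; apply/orP; right; apply: leq_bigmax_cond.
  by rewrite !inE wA pw.
rewrite sum_constP leq_mul2r; apply/orP; right.
apply: (leq_trans _ (eq_leq (card_part (part r n v)))); apply: subset_leq_card.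
by apply/subsetP => w; rewrite !inE => /andP [].
Qed.
Lemma singleton_in (f0 : allocfun r k) v : f0 \in F -> f0 ord0 = part r n v ->
  n <= delta_F r n k F J ord0 -> 0 < n -> [set v] \in J.
Proof.
move=> f0F f0v hn n0.
have h1 : delta_F r n k F J ord0 <= delta_f r n k J f0 ord0 by apply: bigminn_le.
have h2 := leq_trans hn h1.
move: h2; rewrite /delta_f; case: existsP => [[u0 fu0]|_]; last by rewrite leqNgt n0.
move=> h2.
have h3 : n <= ext_deg r n k J f0 ord0 u0 by apply: (leq_trans h2); apply: bigminn_le.
have t0 : tset r n (@ord0 K) u0 = set0.
  by apply/setP => z; rewrite inE; apply/imsetP => -[[]].
move: h3; rewrite /ext_deg t0.
set E := [set w | _] => h3.
have : E == [set w : V | part r n w == f0 ord0].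
  rewrite eqEcard card_part h3 andbT; apply/subsetP => w; rewrite !inE.
  by case/andP => /andP [].
move/eqP => EE.
have : v \in E by rewrite EE inE f0v.
by rewrite inE setU0 => /andP [].
Qed.

Lemma chain (f0 : allocfun r k) v (z : R) : Rle 0 z -> 0 < #|Pset f0 v 1| ->
  (forall j : 'I_k, 0 < j -> Rle z (INR (delta_f r n k J f0 j))) ->
  forall m, m < k -> Rle (pow z m) (INR #|Pset f0 v m.+1|).
Proof.
move=> z0 p1 hz; elim => [_|m IH hm].
  by rewrite /=; apply: (le_INR 1); apply/leP.
have hm' : m < k by apply: ltnW.
have := P_step f0 v (Ordinal hm) isT; rewrite /= => /leP /le_INR; rewrite mult_INR => H.
apply: Rle_trans H; rewrite /= Rmult_comm.
apply: Rmult_le_compat => //; first by apply: pow_le.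
- exact: IH.
- exact: (hz (Ordinal hm)).
Qed.
End S.

Lemma INR_expn a b : INR (a ^ b) = pow (INR a) b.
Proof. by elim: b => [|b IH] //; rewrite expnS mult_INR IH. Qed.

Theorem proposition4p1 :
  forall (zeta : R) (r k : nat),
    Rlt 0 zeta -> 0 < r -> 0 < k ->
    exists eta0 : R, Rlt 0 eta0 /\
    forall eta : R, Rlt 0 eta -> Rle eta eta0 ->
    exists n0 : nat, forall n : nat, n0 <= n ->
    forall (F : {set allocfun r k}) (J : {set {set vtx r n}}),
      is_allocation r k F ->
      (forall j : 'I_r, exists2 f, f \in F & exists i : 'I_k, f i = j) ->
      is_kcomplex r n k J ->
      is_PF_partite r n k F J ->
      (forall j : 'I_k,
         Rle (if nat_of_ord j == 0 then INR n else Rmult zeta (INR n))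
             (INR (delta_F r n k F J j))) ->
      forall (jlast : 'I_k), (nat_of_ord jlast).+1 = k ->
      forall (j : 'I_r) (v : vtx r n), part r n v = j ->
        Rle (Rminus (INR (delta_F r n k F J jlast)) (Rmult (sqrt eta) (INR n)))
            (INR #|tildeN r n k (top_edges r n k J) eta 1 v
                   :&: [set w : vtx r n | part r n w == j]|).
Proof.
move=> zeta r [//|K] hz hr _.
set c := pow (Rdiv zeta (Rmult (INR r) (INR K.+1))) K.
have c0 : Rlt 0 c.
  apply: pow_lt; apply: Rdiv_lt_0_compat => //; apply: Rmult_lt_0_compat; apply: lt_0_INR; apply/ltP => //.
exists (Rmult c c); split; first by apply: Rmult_lt_0_compat.
move=> eta he hle; exists 0 => n _ F J Hal Hsurj Hcx Hpart Hdeg jlast hjl j v hv.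
have -> : jlast = ord_max by apply: val_inj => /=; case: hjl.
subst j.
have n0 : 0 < n by case: v => _ [x hx]; apply: leq_ltn_trans hx.
have [f fF [i fi]] := Hsurj (part r n v).
set f0 : allocfun r K.+1 := [ffun x => f (tperm ord0 i x)].
have f0F : f0 \in F by exact: (F_perm _ _ _ Hal f (tperm ord0 i) fF).
have f0v : f0 ord0 = part r n v by rewrite ffunE tpermL.
have hd0 : n <= delta_F r n K.+1 F J ord0.
  by have := Hdeg ord0; rewrite /= => /INR_le /leP.
have vJ := singleton_in _ _ _ _ _ _ _ f0F f0v hd0 n0.
have p1 := P1 _ _ _ _ _ _ (esym f0v) vJ.
have hz' : forall j : 'I_K.+1, 0 < j -> Rle (Rmult zeta (INR n)) (INR (delta_f r n K.+1 J f0 j)).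
  move=> j j0; have := Hdeg j; rewrite eqn0Ngt j0 /= => H; apply: (Rle_trans _ _ _ H).
  by apply: le_INR; apply/leP; apply: bigminn_le.
have zn0 : Rle 0 (Rmult zeta (INR n)).
  by apply: Rmult_le_pos; [apply: Rlt_le | apply: pos_INR].
have hT := chain _ _ _ _ _ _ _ zn0 p1 hz' _ (ltnSn K).
have hT' : Rle (pow (Rmult zeta (INR n)) K) (INR #|Tv r n K J v|).
  by apply: (Rle_trans _ _ _ hT); apply: le_INR; apply/leP; apply: P_tail.
set A := tildeN r n K.+1 (top_edges r n K.+1 J) eta 1 v :&: [set w | part r n w == part r n v].
have hmain := main_nat _ _ _ _ _ Hal Hcx Hpart v A.
set B := [set w | part r n w == part r n v] :\: A in hmain.
set Mx := \max_(w in B) _ in hmain.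
have hMx : Rle (INR Mx) (Rmult eta (pow (Rmult (INR r) (INR n)) K)).
  have hN : #|[set: vtx r n]| = r * n by rewrite cardsT card_prod !card_ord.
  have hE : 1 * K.+1 - 1 = K by rewrite mul1n subSS subn0.
  case: (posnP #|B|) => [/cards0_eq B0|B0].
    rewrite /Mx B0 big_set0.
    rewrite /=; apply: Rmult_le_pos; first by apply: Rlt_le.
    by apply: pow_le; apply: Rmult_le_pos; apply: pos_INR.
  rewrite /Mx; have [w wB ->] := eq_bigmax_cond (fun w => reach_count r n K.+1 (top_edges r n K.+1 J) 1 v w) B0.
  have wB2 : (w \in B) = true by exact: wB.
  move: wB2; rewrite /B !inE => /andP [wA wp].
  have : ~~ reachable r n K.+1 (top_edges r n K.+1 J) eta 1 v w.
    by apply: contra wA => H; rewrite /A ?inE wp H.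
  rewrite /reachable hN hE mult_INR; case: Rle_dec => // H _.
  by apply: Rlt_le; apply: Rnot_le_lt.
have := hmain => /leP /le_INR; rewrite plus_INR !mult_INR INR_expn => H.
apply: (@final_real zeta eta c (INR #|Tv r n K J v|) _ _ (INR Mx) (INR n) (INR r) (INR K.+1) (pow (INR K) K) K) => //.
- by apply: lt_0_INR; apply/ltP.
- by apply: Rlt_le.
- apply: (Rle_trans _ (sqrt (Rmult c c))); first by apply: sqrt_le_1_alt.
  by rewrite sqrt_square; [apply: Rle_refl | apply: Rlt_le].
- rewrite /c -Rpow_mult_distr; congr pow; field; split; apply: not_0_INR => //.
  by apply/eqP; rewrite -lt0n.
- by apply: pos_INR.
- by apply: pos_INR.
- by apply: pow_le; apply: pos_INR.
- by apply: pow_incr; split; [apply: pos_INR | apply: le_INR; apply/leP].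
- by apply: pos_INR.
Qed.
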